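(* Let $d,l,m\geq1$, fix arbitrary norms $\|\cdot\|$ on $H(d)$ and on $M_{lm}(\mathbb{R})$, and let $\mathcal{Q}=\{P_1,\dots,P_l\}$ be a measurement scheme of POVMs with outcome set $\{1,\dots,m\}$ which determines any pure state among all states. Then there is a constant $C_{\mathcal{Q}}>0$ such that for every $\epsilon>0$, every pure state $\sigma$ and every $f\in M_{lm}(\mathbb{R})$ with $\|f\|\leq\epsilon$, setting $b=M_{\mathcal{Q}}(\sigma)+f$, any minimizer $Y^*$ of the convex program $$\text{minimize } \|M_{\mathcal{Q}}(Y)-b\|_2\quad\text{subject to } Y\in H(d),\ Y\geq0$$ satisfies $\|Y^*-\sigma\|\leq C_{\mathcal{Q}}\,\epsilon$. Here $\|\cdot\|_2$ is the Hilbert–Schmidt (Frobenius) norm on $M_{lm}(\mathbb{R})$.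
   Context: $H(d)$ is the real vector space of $d\times d$ complex Hermitian matrices and $M_{lm}(\mathbb{R})$ the real $l\times m$ matrices. A POVM with outcome set $\{1,\dots,m\}$ is a map $j\mapsto P(j)\in H(d)$ with $P(j)\geq0$ and $\sum_j P(j)=\mathbb{1}$. The scheme induces $M_{\mathcal{Q}}:H(d)\to M_{lm}(\mathbb{R})$, $M_{\mathcal{Q}}(X)_{i,j}=\mathrm{tr}(XP_i(j))$. A state is a positive semidefinite trace-one matrix; a pure state is a rank-one state $|\psi\rangle\langle\psi|$. $\mathcal{Q}$ determines any pure state among all states if for every pure state $\sigma$ and every state $\varrho$, $M_{\mathcal{Q}}(\sigma)=M_{\mathcal{Q}}(\varrho)$ implies $\varrho=\sigma$. *)

(* Defs.v *)
From HB Require Import structures.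
From mathcomp Require Import all_boot all_order all_algebra.
From mathcomp Require Import reals complex.
Set Implicit Arguments. Unset Strict Implicit. Unset Printing Implicit Defensive.
Import Order.TTheory GRing.Theory Num.Theory.
Local Open Scope ring_scope.
Local Open Scope complex_scope.

Section Defs.
Variable R : realType.
Local Notation C := R[i].

Definition adj (p q : nat) (A : 'M[C]_(p, q)) : 'M[C]_(q, p) :=
  \matrix_(i, j) (A j i)^*.

Definition hermitian (d : nat) (A : 'M[C]_d) : Prop := adj A = A.

Definition psd (d : nat) (A : 'M[C]_d) : Prop :=
  hermitian A /\ forall v : 'cV[C]_d, 0 <= (adj v *m A *m v) 0 0.

Definition state (d : nat) (A : 'M[C]_d) : Prop := psd A /\ \tr A = 1.

Definition pure_state (d : nat) (A : 'M[C]_d) : Prop :=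
  state A /\ \rank A = 1%N.

Definition POVM (d m : nat) (P : 'I_m -> 'M[C]_d) : Prop :=
  (forall j, psd (P j)) /\ \sum_(j < m) P j = 1%:M.

(* the map M_Q : H(d) -> M_{lm}(R), X |-> (tr (X P_i(j)))_{i,j};
   the trace is real for Hermitian X, P_i(j); we take its real part. *)
Definition measmap (d l m : nat) (P : 'I_l -> 'I_m -> 'M[C]_d) (X : 'M[C]_d)
  : 'M[R]_(l, m) := \matrix_(i, j) complex.Re (\tr (X *m P i j)).

Definition determines_pure (d l m : nat) (P : 'I_l -> 'I_m -> 'M[C]_d) : Prop :=
  forall sigma rho : 'M[C]_d, pure_state sigma -> state rho ->
    measmap P sigma = measmap P rho -> rho = sigma.

(* a norm on the real vector space H(d) (only its values on H(d) matter) *)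
Definition herm_norm (d : nat) (N : 'M[C]_d -> R) : Prop :=
  [/\ forall X, hermitian X -> 0 <= N X,
      forall X, hermitian X -> N X = 0 -> X = 0,
      forall (a : R) X, hermitian X -> N (a%:C *: X) = `|a| * N X
    & forall X Y, hermitian X -> hermitian Y -> N (X + Y) <= N X + N Y].

Definition mx_norm (l m : nat) (N : 'M[R]_(l, m) -> R) : Prop :=
  [/\ forall X, 0 <= N X,
      forall X, N X = 0 -> X = 0,
      forall (a : R) X, N (a *: X) = `|a| * N X
    & forall X Y, N (X + Y) <= N X + N Y].

Definition frob (l m : nat) (X : 'M[R]_(l, m)) : R :=
  Num.sqrt (\sum_(i < l) \sum_(j < m) X i j ^+ 2).

Definition is_minimizer (d l m : nat) (P : 'I_l -> 'I_m -> 'M[C]_d)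
  (b : 'M[R]_(l, m)) (Y : 'M[C]_d) : Prop :=
  psd Y /\ forall Y' : 'M[C]_d, psd Y' ->
    frob (measmap P Y - b) <= frob (measmap P Y' - b).

End Defs.

(* Main.v *)
Require Import Defs.
From HB Require Import structures.
From mathcomp Require Import all_boot all_order all_algebra.
From mathcomp Require Import reals complex.
From mathcomp Require Import ring lra.
From mathcomp Require Import classical_sets boolp topology normedtype derive matrix_normedtype.
Set Implicit Arguments. Unset Strict Implicit. Unset Printing Implicit Defensive.
Import Order.TTheory GRing.Theory Num.Theory.
Import numFieldTopology.Exports numFieldNormedType.Exports.
Local Open Scope ring_scope.

Section A.
Local Open Scope complex_scope.
Variable R : realType.
Local Notation C := R[i].

Lemma adjE p q (A : 'M[C]_(p,q)) : adj A = (map_mx conjc A)^T.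
Proof. by apply/matrixP => i j; rewrite !mxE. Qed.

Lemma adjK p q (A : 'M[C]_(p,q)) : adj (adj A) = A.
Proof. by apply/matrixP => i j; rewrite !mxE conjcK. Qed.

Lemma adj_mul p q r (A : 'M[C]_(p,q)) (B : 'M[C]_(q,r)) :
  adj (A *m B) = adj B *m adj A.
Proof. by rewrite !adjE map_mxM trmx_mul. Qed.

Lemma adjD p q (A B : 'M[C]_(p,q)) : adj (A + B) = adj A + adj B.
Proof. by apply/matrixP => i j; rewrite !mxE rmorphD. Qed.

Lemma adjN p q (A : 'M[C]_(p,q)) : adj (- A) = - adj A.
Proof. by apply/matrixP => i j; rewrite !mxE rmorphN. Qed.

Lemma adjB p q (A B : 'M[C]_(p,q)) : adj (A - B) = adj A - adj B.
Proof. by rewrite adjD adjN. Qed.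

Lemma adjZ p q c (A : 'M[C]_(p,q)) : adj (c *: A) = conjc c *: adj A.
Proof. by apply/matrixP => i j; rewrite !mxE rmorphM. Qed.

Lemma adj0 p q : adj (0 : 'M[C]_(p,q)) = 0.
Proof. by apply/matrixP => i j; rewrite !mxE conjc0. Qed.

Lemma adj1 p : adj (1%:M : 'M[C]_p) = 1%:M.
Proof. by apply/matrixP => i j; rewrite !mxE conjc_nat eq_sym. Qed.

Definition bf n (A : 'M[C]_n) (u v : 'cV[C]_n) : C := (adj u *m A *m v) 0 0.
Definition dotc n (u v : 'cV[C]_n) : C := (adj u *m v) 0 0.

Lemma mx11M p (M : 'M[C]_(1,p)) (N : 'M[C]_(p,1)) :
  (M *m N) 0 0 = \sum_k M 0 k * N k 0.
Proof. by rewrite mxE. Qed.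

Lemma adj11 (M : 'M[C]_1) : (adj M) 0 0 = conjc (M 0 0).
Proof. by rewrite mxE. Qed.

Lemma bfDl n (A : 'M[C]_n) u1 u2 v : bf A (u1 + u2) v = bf A u1 v + bf A u2 v.
Proof. by rewrite /bf adjD !mulmxDl mxE. Qed.
Lemma bfDr n (A : 'M[C]_n) u v1 v2 : bf A u (v1 + v2) = bf A u v1 + bf A u v2.
Proof. by rewrite /bf !mulmxDr mxE. Qed.
Lemma bfNl n (A : 'M[C]_n) u v : bf A (- u) v = - bf A u v.
Proof. by rewrite /bf adjN !mulNmx mxE. Qed.
Lemma bfNr n (A : 'M[C]_n) u v : bf A u (- v) = - bf A u v.
Proof. by rewrite /bf !mulmxN mxE. Qed.
Lemma bfBl n (A : 'M[C]_n) u1 u2 v : bf A (u1 - u2) v = bf A u1 v - bf A u2 v.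
Proof. by rewrite bfDl bfNl. Qed.
Lemma bfBr n (A : 'M[C]_n) u v1 v2 : bf A u (v1 - v2) = bf A u v1 - bf A u v2.
Proof. by rewrite bfDr bfNr. Qed.
Lemma bfZl n (A : 'M[C]_n) c u v : bf A (c *: u) v = conjc c * bf A u v.
Proof. by rewrite /bf adjZ -!scalemxAl mxE. Qed.
Lemma bfZr n (A : 'M[C]_n) c u v : bf A u (c *: v) = c * bf A u v.
Proof. by rewrite /bf -!scalemxAr mxE. Qed.
Lemma bfAD n (A B : 'M[C]_n) u v : bf (A + B) u v = bf A u v + bf B u v.
Proof. by rewrite /bf mulmxDr mulmxDl mxE. Qed.
Lemma bfAN n (A : 'M[C]_n) u v : bf (- A) u v = - bf A u v.
Proof. by rewrite /bf mulmxN mulNmx mxE. Qed.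
Lemma bfAB n (A B : 'M[C]_n) u v : bf (A - B) u v = bf A u v - bf B u v.
Proof. by rewrite bfAD bfAN. Qed.
Lemma bfAZ n (A : 'M[C]_n) c u v : bf (c *: A) u v = c * bf A u v.
Proof. by rewrite /bf -scalemxAr -scalemxAl mxE. Qed.
Lemma bf1 n (u v : 'cV[C]_n) : bf 1%:M u v = dotc u v.
Proof. by rewrite /bf mulmx1. Qed.

Lemma bf_conj n (A : 'M[C]_n) (u v : 'cV[C]_n) : Defs.hermitian A -> conjc (bf A u v) = bf A v u.
Proof.
move=> hA; rewrite /bf -[LHS]adj11 !adj_mul adjK hA mulmxA //.
Qed.

Lemma dotc_conj n (u v : 'cV[C]_n) : conjc (dotc u v) = dotc v u.
Proof. by rewrite -!bf1 bf_conj // /Defs.hermitian adj1. Qed.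

Lemma bf_rank1 n (u z w : 'cV[C]_n) : bf (u *m adj u) z w = dotc z u * dotc u w.
Proof.
by rewrite /bf /dotc !mulmxA -(mulmxA (adj z *m u)) mx11M big_ord1.
Qed.


Local Notation herm := (@Defs.hermitian R _).

Lemma mulcJ_eq0 (x : C) : (x * conjc x == 0) = (x == 0).
Proof. exact: mul_conjC_eq0. Qed.
Lemma conjc_real' (x : C) : x \is Num.real -> conjc x = x.
Proof. exact: conj_Creal. Qed.

Lemma bf_real n (A : 'M[C]_n) v : herm A -> bf A v v \is Num.real.
Proof. by move=> hA; apply/CrealP; exact: bf_conj. Qed.

Lemma dotc_ge0 n (u : 'cV[C]_n) : 0 <= dotc u u.
Proof.
rewrite /dotc mx11M; apply: sumr_ge0 => k _; rewrite mxE mulrC.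
exact: mul_conjC_ge0.
Qed.

Lemma dotc_eq0 n (u : 'cV[C]_n) : dotc u u = 0 -> u = 0.
Proof.
rewrite /dotc mx11M => h; apply/matrixP => k o; rewrite (ord1 o) mxE.
have hk : adj u 0 k * u k 0 = 0.
  by apply: (psumr_eq0P _ h) => // i _; rewrite mxE mulrC; exact: mul_conjC_ge0.
by move: hk; rewrite mxE mulrC => /eqP; rewrite mul_conjC_eq0 => /eqP.
Qed.

Lemma bf_sym_zero n (A : 'M[C]_n) u v : herm A -> bf A u v = 0 -> bf A v u = 0.
Proof. by move=> hA h; rewrite -bf_conj // h conjc0. Qed.

Lemma kerL n (P : 'M[C]_n) e : herm P -> (forall z, 0 <= bf P z z) ->
  bf P e e = 0 -> forall w, bf P w e = 0.
Proof.
move=> hP pP he w; set b := bf P w e; set Q := bf P w w.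
have hQ : 0 <= Q by exact: pP.
set k := (1 + Q)^-1.
have k0 : 0 < k by rewrite invr_gt0 ltr_wpDr.
have kQ : k * Q <= 1.
  by rewrite /k mulrC ler_pdivrMr ?ltr_wpDr // mul1r lerDr.
have := pP (e + (- (b * k)) *: w).
rewrite !bfDl !bfDr !bfZl !bfZr he -(bf_conj _ _ hP) -/b -/Q.
rewrite rmorphN rmorphM /= (conjc_real' (gtr0_real k0)) add0r.
have -> : - (b * k) * b^* + (- (b^* * k) * b + - (b^* * k) * (- (b * k) * Q))
   = (b * b^*) * k * (k * Q - 2) by ring.
move=> h.
have k2 : k * Q - 2 < 0 by rewrite subr_lt0 (le_lt_trans kQ) // ltr1n.
have hneg : b * b^* * k * (k * Q - 2) <= 0.
  by apply: mulr_ge0_le0; [apply: mulr_ge0; [exact: mul_conjC_ge0|exact: ltW]|exact: ltW].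
have /eqP : b * b^* * k * (k * Q - 2) = 0 by apply/eqP; rewrite eq_le h hneg.
rewrite !mulf_eq0 (gt_eqF k0) (lt_eqF k2) !orbF conjC_eq0 orbb.
by move/eqP.
Qed.

Lemma dotcDr n (u v w : 'cV[C]_n) : dotc u (v + w) = dotc u v + dotc u w.
Proof. by rewrite -!bf1 bfDr. Qed.
Lemma dotcDl n (u v w : 'cV[C]_n) : dotc (u + v) w = dotc u w + dotc v w.
Proof. by rewrite -!bf1 bfDl. Qed.
Lemma dotcBr n (u v w : 'cV[C]_n) : dotc u (v - w) = dotc u v - dotc u w.
Proof. by rewrite -!bf1 bfBr. Qed.
Lemma dotcBl n (u v w : 'cV[C]_n) : dotc (u - v) w = dotc u w - dotc v w.
Proof. by rewrite -!bf1 bfBl. Qed.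
Lemma dotcZr n c (u v : 'cV[C]_n) : dotc u (c *: v) = c * dotc u v.
Proof. by rewrite -!bf1 bfZr. Qed.
Lemma dotcZl n c (u v : 'cV[C]_n) : dotc (c *: u) v = conjc c * dotc u v.
Proof. by rewrite -!bf1 bfZl. Qed.

Lemma herm_sub_scale n (X : 'M[C]_n) (E : 'M[C]_n) (lam : C) :
  herm X -> herm E -> lam \is Num.real -> herm (X - lam *: E).
Proof.
move=> hX hE lR; rewrite /Defs.hermitian adjB adjZ hX hE.
by rewrite ?(conjc_real' lR) ?(conj_Creal lR).
Qed.

Lemma herm_rank1 n (e : 'cV[C]_n) : herm (e *m adj e).
Proof. by rewrite /Defs.hermitian adj_mul adjK. Qed.

Lemma herm1 n : herm (1%:M : 'M[C]_n).
Proof. exact: adj1. Qed.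

Lemma KL n (X : 'M[C]_n) (r e : 'cV[C]_n) (lam : C) :
  herm X -> (forall y, dotc r y = 0 -> 0 <= bf X y y) ->
  dotc e e = 1 -> bf X e e = lam -> lam < 0 ->
  (forall z, lam * dotc z z <= bf X z z) ->
  psd (X - lam *: (e *m adj e)).
Proof.
move=> hX H ee Xe lam0 Hmin.
have lamR : lam \is Num.real by exact: ltr0_real.
have hP : herm (X - lam *: 1%:M) by exact: herm_sub_scale (herm1 n) lamR.
have pP : forall z, 0 <= bf (X - lam *: 1%:M) z z.
  by move=> z; rewrite bfAB bfAZ bf1 subr_ge0.
have Pe : bf (X - lam *: 1%:M) e e = 0 by rewrite bfAB bfAZ bf1 Xe ee mulr1 subrr.
have hXe : forall w, bf X w e = lam * dotc w e.
  move=> w; apply/eqP; rewrite -subr_eq0; apply/eqP.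
  by rewrite -bf1 -bfAZ -bfAB; exact: kerL.
have hXe0 : forall w, dotc e w = 0 -> bf X w e = 0.
  by move=> w ew; rewrite hXe -dotc_conj ew conjc0 mulr0.
have hXe' : forall w, dotc e w = 0 -> bf X e w = 0.
  by move=> w ew; apply: bf_sym_zero => //; exact: hXe0.
have hperp : forall z, dotc e z = 0 -> 0 <= bf X z z.
  move=> z ez; have qR := bf_real z hX.
  rewrite (real_leNgt (real0 _) qR); apply/negP => qneg.
  pose a := dotc r z; pose be := - dotc r e.
  have ry : dotc r (a *: e + be *: z) = 0.
    by rewrite dotcDr !dotcZr /be /a mulNr mulrC subrr.
  have := H _ ry.
  rewrite !bfDl !bfDr !bfZl !bfZr Xe hXe' // hXe0 // !mulr0 addr0 add0r.
  move=> hsum.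
  have t1 : a^* * (a * lam) <= 0.
    rewrite mulrA; apply: mulr_ge0_le0; last exact: ltW.
    by rewrite mulrC; exact: mul_conjC_ge0.
  have t2 : be^* * (be * bf X z z) <= 0.
    rewrite mulrA; apply: mulr_ge0_le0; last exact: ltW.
    by rewrite mulrC; exact: mul_conjC_ge0.
  have t20 : be^* * (be * bf X z z) = 0.
    apply/eqP; rewrite eq_le t2 /=.
    by rewrite -(lerD2l (a^* * (a * lam))) addr0 (le_trans t1).
  move/eqP: t20; rewrite mulrA mulf_eq0 (lt_eqF qneg) orbF mulrC mulcJ_eq0.
  rewrite /be oppr_eq0 => /eqP re.
  by have := H e re; rewrite Xe => /le_lt_trans/(_ lam0); rewrite ltxx.
split; first exact: herm_sub_scale (herm_rank1 e) lamR.
move=> z.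
have [a [z' [ez' [ha hz]]]] : exists a z', dotc e z' = 0 /\ dotc e z = a /\ z = z' + a *: e.
  exists (dotc e z), (z - dotc e z *: e); split; last by split; rewrite ?subrK.
  by rewrite dotcBr dotcZr ee mulr1 subrr.
have := hperp _ ez'.
have -> : (adj z *m (X - lam *: (e *m adj e)) *m z) 0 0 = bf X z' z'.
  rewrite -/(bf _ z z) bfAB bfAZ bf_rank1 -(dotc_conj e z) ha.
  rewrite {1 2}hz !bfDl !bfDr !bfZl !bfZr hXe0 // hXe' // Xe !mulr0 addr0 add0r.
  by rewrite /=; ring.
by [].
Qed.

Lemma adj_delta n (i : 'I_n) : adj (delta_mx i 0 : 'cV[C]_n) = delta_mx 0 i.
Proof.
by apply/matrixP => a b; rewrite !mxE (ord1 a) eqxx /= ?andbT conjc_nat.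
Qed.

Lemma bf_delta n (A : 'M[C]_n) i j : bf A (delta_mx i 0) (delta_mx j 0) = A i j.
Proof. by rewrite /bf adj_delta -rowE -colE !mxE. Qed.

Lemma psd_tr0 n (Y : 'M[C]_n) : psd Y -> \tr Y = 0 -> Y = 0.
Proof.
move=> [hY pY] t0.
have pY' : forall z, 0 <= bf Y z z by exact: pY.
have d0 : forall i, Y i i = 0.
  move=> i; apply: (psumr_eq0P _ t0) => // k _.
  by rewrite -bf_delta; exact: pY'.
apply/matrixP => i j; rewrite mxE -bf_delta.
apply: (kerL hY pY'); rewrite bf_delta; exact: d0.
Qed.

Lemma pure_of_unit n (e : 'cV[C]_n) : dotc e e = 1 -> pure_state (e *m adj e).
Proof.
move=> ee.
have tr1 : \tr (e *m adj e) = 1 by rewrite mxtrace_mulC trace_mx11.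
split; first split => //; first split.
- exact: herm_rank1.
- move=> z; rewrite -/(bf _ z z) bf_rank1 -dotc_conj mulrC.
  exact: mul_conjC_ge0.
apply/eqP; rewrite eqn_leq (leq_trans (mxrankM_maxl _ _) (rank_leq_col _)) /=.
rewrite lt0n mxrank_eq0; apply/eqP => h.
by move: tr1; rewrite h mxtrace0 => /eqP; rewrite eq_sym oner_eq0.
Qed.

Lemma pure_hyper n (s : 'M[C]_n) : pure_state s ->
  exists r : 'cV[C]_n, dotc r r = 1 /\ forall y, dotc r y = 0 -> s *m y = 0.
Proof.
move=> [_ rk].
case: (pickP (fun i => row i s != 0)) => [i0 /= hi0|hnone]; last first.
  have s0 : s = 0.
    by apply/row_matrixP => i; rewrite row0; move/negbFE/eqP: (hnone i).
  by move: rk; rewrite s0 mxrank0.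
have sub1 : (s <= row i0 s)%MS.
  have := mxrank_leqif_sup (row_sub i0 s); move=> [_ <-].
  apply/eqP; apply/anti_leq; rewrite (mxrank_leqif_sup (row_sub i0 s)).1 /=.
  by rewrite rk lt0n mxrank_eq0.
have [D hD] := submxP sub1.
pose r' := adj (row i0 s).
have r'0 : r' != 0.
  apply: contra hi0 => /eqP h; apply/eqP.
  by rewrite -[row i0 s]adjK -/r' h adj0.
have ss : 0 < dotc r' r'.
  rewrite lt_def dotc_ge0 andbT; apply: contra r'0 => /eqP h.
  by apply/eqP; exact: dotc_eq0.
pose c := (sqrtC (dotc r' r'))^-1.
have c0 : 0 < c by rewrite invr_gt0 sqrtC_gt0.
have cR : conjc c = c by apply: conj_Creal; exact: gtr0_real.
exists (c *: r'); split.
  rewrite dotcZl dotcZr cR /c mulrA -expr2 exprVn sqrtCK mulVf //.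
  exact: lt0r_neq0.
move=> y; rewrite dotcZl cR => /eqP; rewrite mulf_eq0 (gt_eqF c0) /= => /eqP h.
have h1 : row i0 s *m y = 0.
  apply/matrixP => a b; rewrite (ord1 a) (ord1 b) mxE.
  by move: h; rewrite /dotc /r' adjK mxE => ->; rewrite mxE.
by rewrite hD -mulmxA h1 mulmx0.
Qed.

Lemma ReB (x y : C) : complex.Re (x - y) = complex.Re x - complex.Re y.
Proof. by case: x => a b; case: y => c e. Qed.
Lemma ReD (x y : C) : complex.Re (x + y) = complex.Re x + complex.Re y.
Proof. by case: x => a b; case: y => c e. Qed.
Lemma Re_sum (I : finType) (F : I -> C) : complex.Re (\sum_i F i) = \sum_i complex.Re (F i).
Proof.
elim/big_rec2: _ => [|i x y _ <-]; first by [].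
by rewrite ReD.
Qed.

Lemma real_complex (x : C) : x \is Num.real -> x = (complex.Re x)%:C.
Proof.
move/CrealP; case: x => a b /= [] hb.
have b0 : b = 0 by lra.
by rewrite b0.
Qed.

Lemma measmapB d l m (P : 'I_l -> 'I_m -> 'M[C]_d) A B :
  measmap P (A - B) = measmap P A - measmap P B.
Proof. by apply/matrixP => i j; rewrite !mxE mulmxBl raddfB ReB. Qed.

Lemma measmapZ0 d l m (P : 'I_l -> 'I_m -> 'M[C]_d) (c : C) A :
  c \is Num.real -> measmap P A = 0 -> measmap P (c *: A) = 0.
Proof.
move=> /real_complex -> h; apply/matrixP => i j.
have := congr1 (fun M : 'M[R]_(l,m) => M i j) h; rewrite !mxE -scalemxAl mxtraceZ.
by case: (\tr _) => a b /= ->; rewrite !mul0r mulr0 subrr.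
Qed.

Lemma measmap_sum d l m (P : 'I_l -> 'I_m -> 'M[C]_d) i X :
  POVM (P i) -> \sum_j measmap P X i j = complex.Re (\tr X).
Proof.
move=> [_ hs]; under eq_bigr do rewrite mxE.
by rewrite -Re_sum -raddf_sum -mulmx_sumr hs mulmx1.
Qed.

Lemma herm_tr_real n (X : 'M[C]_n) : herm X -> \tr X \is Num.real.
Proof.
move=> hX; apply/CrealP.
rewrite -[in RHS]hX adjE mxtrace_tr /mxtrace rmorph_sum /=.
by apply: eq_bigr => i _; rewrite mxE.
Qed.

Lemma psd_scale n (Y : 'M[C]_n) (c : C) : 0 <= c -> psd Y -> psd (c *: Y).
Proof.
move=> c0 [hY pY]; split.
  by rewrite /Defs.hermitian adjZ hY (conjc_real' (ger0_real c0)).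
move=> v; rewrite -/(bf _ v v) bfAZ; apply: mulr_ge0 => //; exact: pY.
Qed.

Lemma core d l m (P : 'I_l -> 'I_m -> 'M[C]_d) (hl : (0 < l)%N)
  (hP : forall i, POVM (P i)) (hQ : determines_pure P)
  (X : 'M[C]_d) (r e : 'cV[C]_d) (lam : C) :
  herm X -> (forall y, dotc r y = 0 -> 0 <= bf X y y) -> measmap P X = 0 ->
  dotc e e = 1 -> bf X e e = lam -> (forall z, lam * dotc z z <= bf X z z) ->
  X = 0.
Proof.
move=> hX hr hM ee Xe Hmin.
have trX : \tr X = 0.
  rewrite (real_complex (herm_tr_real hX)).
  rewrite -(@measmap_sum _ _ _ P (Ordinal hl) X (hP _)) hM.
  by rewrite big1 // => j _; rewrite mxE.
have lamR : lam \is Num.real by rewrite -Xe; exact: bf_real.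
have [lam0|lam0] := boolP (0 <= lam).
  apply: psd_tr0 trX; split => // v.
  apply: le_trans (Hmin v); apply: mulr_ge0 => //; exact: dotc_ge0.
have lamn : lam < 0 by rewrite real_ltNge.
have hY := KL hX hr ee Xe lamn Hmin.
pose mu := - lam.
have mu0 : 0 < mu by rewrite oppr_gt0.
pose rho := mu^-1 *: (X - lam *: (e *m adj e)).
have hpure := pure_of_unit ee.
have hrho : state rho.
  split; first by apply: psd_scale => //; rewrite invr_ge0 ltW.
  rewrite /rho mxtraceZ raddfB /= mxtraceZ trX.
  have -> : \tr (e *m adj e) = 1 by rewrite mxtrace_mulC trace_mx11.
  by rewrite add0r mulr1 -/mu mulVf // gt_eqF.
have diff : rho - e *m adj e = mu^-1 *: X.
  have ml : mu^-1 * lam = -1 by rewrite /mu invrN mulNr mulVf // lt_eqF.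
  rewrite /rho scalerBr scalerA ml.
  by rewrite scaleN1r opprK addrK.
have hM' : measmap P rho = measmap P (e *m adj e).
  apply/eqP; rewrite -subr_eq0 -measmapB diff; apply/eqP.
  by apply: measmapZ0 => //; rewrite realV; exact: gtr0_real.
have := hQ _ _ hpure hrho (esym hM').
move=> /eqP; rewrite -subr_eq0 diff scaler_eq0 invr_eq0 (gt_eqF mu0) /=.
by move/eqP.
Qed.
End A.

Section B.
Local Open Scope classical_set_scope.
Local Open Scope complex_scope.
Variable R : realType.

Lemma rV_norm_le N (w : 'rV[R]_N) B : 0 <= B -> (forall k, `|w 0 k| <= B) -> `|w| <= B.
Proof.
move=> B0 h; have -> : `|w| = mx_norm w by []. rewrite mx_normrE; apply: bigmax_le => // -[i k] _ /=.
by rewrite (ord1 i).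
Qed.


Lemma GLmin N (A : set 'rV[R]_N) (F : 'rV[R]_N -> R) (B : R) :
  A !=set0 -> closed A -> (forall w, A w -> forall k, `|w 0 k| <= B) ->
  continuous F -> exists2 w0, A w0 & forall w, A w -> F w0 <= F w.
Proof.
move=> A0 cA hB cF.
have bA : bounded_set A.
  exists (Num.max B 0); split; first by rewrite realE le_max lexx orbT.
  move=> M hM x Ax; apply: rV_norm_le.
    by apply: le_trans (ltW hM); rewrite le_max lexx orbT.
  move=> k; apply: le_trans (hB _ Ax k) _.
  by apply: le_trans (ltW hM); rewrite le_max lexx.
have [w0 w0A hmin] := EVT_min_rV A0 (bounded_closed_compact bA cA)
  (continuous_subspaceT cF).
exists w0; first by rewrite inE in w0A.
by move=> w Aw; apply: hmin; rewrite inE.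
Qed.

Lemma GL N (A : set 'rV[R]_N) (F : 'rV[R]_N -> R) (B : R) :
  closed A -> (forall w, A w -> forall k, `|w 0 k| <= B) ->
  continuous F -> (forall w, A w -> 0 < F w) ->
  exists2 c, 0 < c & forall w, A w -> c <= F w.
Proof.
move=> cA hB cF hpos.
have [A0|/set0P A0] := eqVneq A set0.
  by exists 1 => // w; rewrite A0.
have [w0 Aw0 hmin] := GLmin A0 cA hB cF.
by exists (F w0); [exact: hpos|exact: hmin].
Qed.

Local Notation C := R[i].

Definition ccont N (g : 'rV[R]_N -> C) :=
  continuous (fun w => complex.Re (g w)) /\ continuous (fun w => complex.Im (g w)).

Lemma cont_cst N (a : R) : continuous (fun _ : 'rV[R]_N => a).
Proof. by move=> w; exact: cst_continuous. Qed.

Lemma cont_add N (f g : 'rV[R]_N -> R) : continuous f -> continuous g ->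
  continuous (fun w => f w + g w).
Proof. by move=> cf cg w; exact: (continuousD (cf w) (cg w)). Qed.
Lemma cont_opp N (f : 'rV[R]_N -> R) : continuous f -> continuous (fun w => - f w).
Proof. by move=> cf w; exact: (continuousN (cf w)). Qed.
Lemma cont_mul N (f g : 'rV[R]_N -> R) : continuous f -> continuous g ->
  continuous (fun w => f w * g w).
Proof. by move=> cf cg w; exact: (continuousM (cf w) (cg w)). Qed.
Lemma cont_norm N (f : 'rV[R]_N -> R) : continuous f -> continuous (fun w => `|f w|).
Proof. move=> cf w; exact: (continuous_comp (cf w) (@norm_continuous _ R^o (f w))). Qed.
Lemma cont_coord N k : continuous (fun w : 'rV[R]_N => w 0 k).
Proof. exact: coord_continuous. Qed.

Lemma cont_sum N (I : finType) (F : I -> 'rV[R]_N -> R) :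
  (forall i, continuous (F i)) -> continuous (fun w => \sum_i F i w).
Proof.
move=> cF.
suff H : forall s, continuous (fun w => \sum_(i <- s) F i w) by exact: H.
elim => [|i s ih].
  have -> : (fun w => \sum_(i <- [::]) F i w) = (fun _ => 0).
    by apply: funext => w; rewrite big_nil.
  exact: cont_cst.
have -> : (fun w => \sum_(j <- i :: s) F j w) = (fun w => F i w + \sum_(j <- s) F j w).
  by apply: funext => w; rewrite big_cons.
exact: cont_add.
Qed.

Lemma ccont_cst N (a : C) : ccont (fun _ : 'rV[R]_N => a).
Proof. by split; exact: cont_cst. Qed.
Lemma ImD (x y : C) : complex.Im (x + y) = complex.Im x + complex.Im y.
Proof. by case: x => a b; case: y => c e. Qed.
Lemma ReN (x : C) : complex.Re (- x) = - complex.Re x.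
Proof. by case: x. Qed.
Lemma ImN (x : C) : complex.Im (- x) = - complex.Im x.
Proof. by case: x. Qed.
Lemma ReM (x y : C) : complex.Re (x * y) = complex.Re x * complex.Re y - complex.Im x * complex.Im y.
Proof. by case: x => a b; case: y => c e. Qed.
Lemma ImM (x y : C) : complex.Im (x * y) = complex.Re x * complex.Im y + complex.Im x * complex.Re y.
Proof. by case: x => a b; case: y => c e. Qed.
Lemma ReJ (x : C) : complex.Re (conjc x) = complex.Re x.
Proof. by case: x. Qed.
Lemma ImJ (x : C) : complex.Im (conjc x) = - complex.Im x.
Proof. by case: x. Qed.
Lemma Im_sum (I : finType) (F : I -> C) : complex.Im (\sum_i F i) = \sum_i complex.Im (F i).
Proof. elim/big_rec2: _ => [|i x y _ <-]; first by []. by rewrite ImD. Qed.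

Lemma ccont_add N (f g : 'rV[R]_N -> C) : ccont f -> ccont g -> ccont (fun w => f w + g w).
Proof.
case=> f1 f2 [g1 g2]; split.
  have -> : (fun w => complex.Re (f w + g w)) = (fun w => complex.Re (f w) + complex.Re (g w)).
    by apply: funext => w; rewrite ReD.
  exact: cont_add.
have -> : (fun w => complex.Im (f w + g w)) = (fun w => complex.Im (f w) + complex.Im (g w)).
  by apply: funext => w; rewrite ImD.
exact: cont_add.
Qed.
Lemma ccont_opp N (f : 'rV[R]_N -> C) : ccont f -> ccont (fun w => - f w).
Proof.
case=> f1 f2; split.
  have -> : (fun w => complex.Re (- f w)) = (fun w => - complex.Re (f w)).
    by apply: funext => w; rewrite ReN.
  exact: cont_opp.
have -> : (fun w => complex.Im (- f w)) = (fun w => - complex.Im (f w)).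
  by apply: funext => w; rewrite ImN.
exact: cont_opp.
Qed.
Lemma ccont_mul N (f g : 'rV[R]_N -> C) : ccont f -> ccont g -> ccont (fun w => f w * g w).
Proof.
case=> f1 f2 [g1 g2]; split.
  have -> : (fun w => complex.Re (f w * g w)) = (fun w =>
     complex.Re (f w) * complex.Re (g w) + - (complex.Im (f w) * complex.Im (g w))).
    by apply: funext => w; rewrite ReM.
  by apply: cont_add; [|apply: cont_opp]; exact: cont_mul.
have -> : (fun w => complex.Im (f w * g w)) = (fun w =>
   complex.Re (f w) * complex.Im (g w) + complex.Im (f w) * complex.Re (g w)).
  by apply: funext => w; rewrite ImM.
by apply: cont_add; exact: cont_mul.
Qed.
Lemma ccont_conj N (f : 'rV[R]_N -> C) : ccont f -> ccont (fun w => conjc (f w)).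
Proof.
case=> f1 f2; split.
  have -> : (fun w => complex.Re (conjc (f w))) = (fun w => complex.Re (f w)).
    by apply: funext => w; rewrite ReJ.
  exact: f1.
have -> : (fun w => complex.Im (conjc (f w))) = (fun w => - complex.Im (f w)).
  by apply: funext => w; rewrite ImJ.
exact: cont_opp.
Qed.
Lemma ccont_sum N (I : finType) (F : I -> 'rV[R]_N -> C) :
  (forall i, ccont (F i)) -> ccont (fun w => \sum_i F i w).
Proof.
move=> cF; split.
  have -> : (fun w => complex.Re (\sum_i F i w)) = (fun w => \sum_i complex.Re (F i w)).
    by apply: funext => w; rewrite Re_sum.
  by apply: cont_sum => i; case: (cF i).
have -> : (fun w => complex.Im (\sum_i F i w)) = (fun w => \sum_i complex.Im (F i w)).
  by apply: funext => w; rewrite Im_sum.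
by apply: cont_sum => i; case: (cF i).
Qed.

Definition mcont N p q (A : 'rV[R]_N -> 'M[C]_(p,q)) := forall i j, ccont (fun w => A w i j).

Lemma mcont_cst N p q (M : 'M[C]_(p,q)) : mcont (fun _ : 'rV[R]_N => M).
Proof. by move=> i j; exact: ccont_cst. Qed.
Lemma mcont_add N p q (A B : 'rV[R]_N -> 'M[C]_(p,q)) : mcont A -> mcont B -> mcont (fun w => A w + B w).
Proof.
move=> cA cB i j.
have -> : (fun w => (A w + B w) i j) = (fun w => A w i j + B w i j).
  by apply: funext => w; rewrite mxE.
exact: ccont_add.
Qed.
Lemma mcont_opp N p q (A : 'rV[R]_N -> 'M[C]_(p,q)) : mcont A -> mcont (fun w => - A w).
Proof.
move=> cA i j.
have -> : (fun w => (- A w) i j) = (fun w => - A w i j).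
  by apply: funext => w; rewrite mxE.
exact: ccont_opp.
Qed.
Lemma mcont_mul N p q s (A : 'rV[R]_N -> 'M[C]_(p,q)) (B : 'rV[R]_N -> 'M[C]_(q,s)) :
  mcont A -> mcont B -> mcont (fun w => A w *m B w).
Proof.
move=> cA cB i j.
have -> : (fun w => (A w *m B w) i j) = (fun w => \sum_k A w i k * B w k j).
  by apply: funext => w; rewrite mxE.
by apply: ccont_sum => k; exact: ccont_mul.
Qed.
Lemma mcont_adj N p q (A : 'rV[R]_N -> 'M[C]_(p,q)) : mcont A -> mcont (fun w => adj (A w)).
Proof.
move=> cA i j.
have -> : (fun w => (adj (A w)) i j) = (fun w => conjc (A w j i)).
  by apply: funext => w; rewrite mxE.
exact: ccont_conj.
Qed.
Lemma mcont_scale N p q (c : 'rV[R]_N -> C) (A : 'rV[R]_N -> 'M[C]_(p,q)) :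
  ccont c -> mcont A -> mcont (fun w => c w *: A w).
Proof.
move=> cc cA i j.
have -> : (fun w => (c w *: A w) i j) = (fun w => c w * A w i j).
  by apply: funext => w; rewrite mxE.
exact: ccont_mul.
Qed.


Definition crd (T : finType) (w : 'rV[R]_#|{: T * bool}|) (t : T) : C :=
  Complex (w 0 (enum_rank (t, false))) (w 0 (enum_rank (t, true))).

Definition enc (T : finType) (f : T -> C) : 'rV[R]_#|{: T * bool}| :=
  \row_k (if (enum_val k).2 then complex.Im (f (enum_val k).1)
          else complex.Re (f (enum_val k).1)).

Lemma crd_enc (T : finType) (f : T -> C) t : crd (enc f) t = f t.
Proof. by rewrite /crd !mxE !enum_rankK /=; case: (f t). Qed.

Lemma coord_crd (T : finType) (w : 'rV[R]_#|{: T * bool}|) k :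
  w 0 k = if (enum_val k).2 then complex.Im (crd w (enum_val k).1)
          else complex.Re (crd w (enum_val k).1).
Proof.
rewrite /crd; case: (enum_val k) (enum_valK k) => t [] /= <- //.
Qed.

Lemma ccont_crd (T : finType) t : ccont (fun w : 'rV[R]_#|{: T * bool}| => crd w t).
Proof. by split; exact: cont_coord. Qed.

Lemma closed_eqf N (g : 'rV[R]_N -> R) a : continuous g -> closed [set w | g w = a].
Proof.
move=> cg; apply: (@preimage_closed _ _ g [set x | x = a]); last exact: closed_eq.
by move=> x _; exact: cg.
Qed.

Lemma closed_gef N (g : 'rV[R]_N -> R) a : continuous g -> closed [set w | a <= g w].
Proof.
move=> cg; apply: (@preimage_closed _ _ g [set x | a <= x]); last exact: closed_ge.
by move=> x _; exact: cg.
Qed.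

Lemma cont_Re N (g : 'rV[R]_N -> C) : ccont g -> continuous (fun w => complex.Re (g w)).
Proof. by case. Qed.
Lemma cont_Im N (g : 'rV[R]_N -> C) : ccont g -> continuous (fun w => complex.Im (g w)).
Proof. by case. Qed.

Definition nu p q (M : 'M[C]_(p,q)) : R :=
  \sum_i \sum_j (`|complex.Re (M i j)| + `|complex.Im (M i j)|).

Lemma cont_nu N p q (A : 'rV[R]_N -> 'M[C]_(p,q)) : mcont A -> continuous (fun w => nu (A w)).
Proof.
move=> cA; apply: cont_sum => i; apply: cont_sum => j.
by apply: cont_add; apply: cont_norm; [apply: cont_Re|apply: cont_Im]; exact: cA.
Qed.

Lemma nu_ge0 p q (M : 'M[C]_(p,q)) : 0 <= nu M.
Proof. by apply: sumr_ge0 => i _; apply: sumr_ge0 => j _; apply: addr_ge0. Qed.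

Lemma nu_entry p q (M : 'M[C]_(p,q)) i j :
  `|complex.Re (M i j)| + `|complex.Im (M i j)| <= nu M.
Proof.
rewrite /nu (bigD1 i) //= (bigD1 j) //= -addrA lerDl.
apply: addr_ge0; first by apply: sumr_ge0 => k _; apply: addr_ge0.
by apply: sumr_ge0 => k _; apply: sumr_ge0 => k' _; apply: addr_ge0.
Qed.

Lemma nu_eq0 p q (M : 'M[C]_(p,q)) : nu M = 0 -> M = 0.
Proof.
move=> h; apply/matrixP => i j; rewrite mxE.
have := nu_entry M i j; rewrite h => h2.
have hr : `|complex.Re (M i j)| = 0.
  by apply/eqP; rewrite eq_le normr_ge0 andbT (le_trans _ h2) // lerDl.
have hi : `|complex.Im (M i j)| = 0.
  by apply/eqP; rewrite eq_le normr_ge0 andbT (le_trans _ h2) // lerDr.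
move/eqP: hr; move/eqP: hi; rewrite !normr_eq0.
by case: (M i j) => a b /= /eqP -> /eqP ->.
Qed.

Lemma nu0 p q : nu (0 : 'M[C]_(p,q)) = 0.
Proof.
by rewrite /nu big1 // => i _; rewrite big1 // => j _; rewrite mxE /= normr0 addr0.
Qed.

Lemma nuZ p q (a : R) (M : 'M[C]_(p,q)) : nu (a%:C *: M) = `|a| * nu M.
Proof.
rewrite /nu mulr_sumr; apply: eq_bigr => i _; rewrite mulr_sumr.
apply: eq_bigr => j _; rewrite mxE mulrDr.
by case: (M i j) => x y /=; rewrite !mul0r !subr0 !addr0 !normrM.
Qed.


Local Notation herm := (@Defs.hermitian R _).

Lemma real_le_Re (x y : C) : x \is Num.real -> y \is Num.real ->
  complex.Re x <= complex.Re y -> x <= y.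
Proof. by move=> /real_complex hx /real_complex hy; rewrite hx hy lecR. Qed.

Lemma Re_ge0 (x : C) : 0 <= x -> 0 <= complex.Re x.
Proof. by rewrite lecE => /andP[]. Qed.

Lemma Re_dotc n (z : 'cV[C]_n) :
  complex.Re (dotc z z) = \sum_k (complex.Re (z k 0) ^+ 2 + complex.Im (z k 0) ^+ 2).
Proof.
rewrite /dotc mx11M Re_sum; apply: eq_bigr => k _; rewrite mxE.
by case: (z k 0) => a b /=; rewrite !expr2; lra.
Qed.

Lemma sq_le1 (x : R) : x ^+ 2 <= 1 -> `|x| <= 1.
Proof. by move=> h; rewrite ler_norml; apply/andP; split; nra. Qed.

Lemma Re_dotc_bound n (z : 'cV[C]_n) k : complex.Re (dotc z z) = 1 ->
  `|complex.Re (z k 0)| <= 1 /\ `|complex.Im (z k 0)| <= 1.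
Proof.
rewrite Re_dotc => h.
have hk : complex.Re (z k 0) ^+ 2 + complex.Im (z k 0) ^+ 2 <= 1.
  rewrite -h (bigD1 k) //= lerDl; apply: sumr_ge0 => i _.
  by apply: addr_ge0; exact: sqr_ge0.
split; apply: sq_le1; apply: le_trans hk.
  by rewrite lerDl sqr_ge0.
by rewrite lerDr sqr_ge0.
Qed.

Lemma crd_bound (T : finType) (w : 'rV[R]_#|{: T * bool}|) B :
  (forall t, `|complex.Re (crd w t)| <= B /\ `|complex.Im (crd w t)| <= B) ->
  forall k, `|w 0 k| <= B.
Proof. by move=> h k; rewrite coord_crd; case: (enum_val k).2; case: (h (enum_val k).1). Qed.

Lemma mcont_entry N p q (A : 'rV[R]_N -> 'M[C]_(p,q)) i j : mcont A -> ccont (fun w => A w i j).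
Proof. by move=> cA; exact: cA. Qed.

Lemma ccont_tr N p (A : 'rV[R]_N -> 'M[C]_p) : mcont A -> ccont (fun w => \tr (A w)).
Proof. by move=> cA; apply: ccont_sum => k; exact: cA. Qed.

Definition zof n (w : 'rV[R]_#|{: 'I_n * bool}|) : 'cV[C]_n := \col_k crd w k.

Lemma mcont_zof n : mcont (@zof n).
Proof.
move=> i j; have -> : (fun w => zof w i j) = (fun w => crd w i).
  by apply: funext => w; rewrite mxE.
exact: ccont_crd.
Qed.

Lemma zof_enc n (z : 'cV[C]_n) : zof (enc (fun k => z k 0)) = z.
Proof. by apply/matrixP => i j; rewrite mxE crd_enc (ord1 j). Qed.

Lemma dotc0 n : dotc (0 : 'cV[C]_n) 0 = 0.
Proof. by rewrite /dotc adj0 mul0mx mxE. Qed.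
Lemma bf00 n (X : 'M[C]_n) : bf X 0 0 = 0.
Proof. by rewrite /bf adj0 !mul0mx mxE. Qed.

Lemma rayleigh n (X : 'M[C]_n) : (0 < n)%N -> herm X ->
  exists e lam, dotc e e = 1 /\ bf X e e = lam /\ forall z, lam * dotc z z <= bf X z z.
Proof.
move=> hn hX.
pose A2 := [set w : 'rV[R]_#|{: 'I_n * bool}| | complex.Re (dotc (zof w) (zof w)) = 1].
pose F := fun w : 'rV[R]_#|{: 'I_n * bool}| => complex.Re (bf X (zof w) (zof w)).
have cdot : ccont (fun w : 'rV[R]_#|{: 'I_n * bool}| => dotc (zof w) (zof w)).
  rewrite /dotc; apply: (@mcont_entry _ _ _ (fun w => adj (zof w) *m zof w) 0 0).
  by apply: mcont_mul; [apply: mcont_adj|]; exact: mcont_zof.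
have cbf : ccont (fun w : 'rV[R]_#|{: 'I_n * bool}| => bf X (zof w) (zof w)).
  rewrite /bf; apply: (@mcont_entry _ _ _ (fun w => adj (zof w) *m X *m zof w) 0 0).
  apply: mcont_mul; last exact: mcont_zof.
  by apply: mcont_mul; [apply: mcont_adj; exact: mcont_zof|exact: mcont_cst].
pose d0 : 'cV[C]_n := delta_mx (Ordinal hn) 0.
have A0 : A2 !=set0.
  exists (enc (fun k => d0 k 0)); rewrite /A2 /= zof_enc.
  by rewrite -bf1 bf_delta mxE eqxx.
have cA : closed A2 by apply: closed_eqf; exact: cont_Re.
have hB : forall w, A2 w -> forall k, `|w 0 k| <= 1.
  move=> w Aw; apply: crd_bound => t.
  have := Re_dotc_bound t Aw; by rewrite mxE.
have [w0 Aw0 hmin] := GLmin A0 cA hB (cont_Re cbf).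
pose e := zof w0; exists e, (bf X e e); split; last split => //.
  have eR : dotc e e \is Num.real by apply: ger0_real; exact: dotc_ge0.
  by rewrite (real_complex eR) Aw0.
move=> z; have [->|z0] := eqVneq z 0; first by rewrite dotc0 bf00 mulr0.
have s0 : 0 < dotc z z.
  rewrite lt_def dotc_ge0 andbT; apply: contra z0 => /eqP h.
  by apply/eqP; exact: dotc_eq0.
pose c := (sqrtC (dotc z z))^-1.
have c0 : 0 < c by rewrite invr_gt0 sqrtC_gt0.
have cR : conjc c = c by apply: conj_Creal; exact: gtr0_real.
have cc : c * c = (dotc z z)^-1 by rewrite -expr2 exprVn sqrtCK.
have hz' : A2 (enc (fun k => (c *: z) k 0)).
  rewrite /A2 /= zof_enc dotcZl dotcZr cR mulrA cc mulVf ?lt0r_neq0 //.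
have := hmin _ hz'; rewrite /F zof_enc bfZl bfZr cR mulrA cc => hle.
have lamR : bf X e e \is Num.real by exact: bf_real.
have bR : (dotc z z)^-1 * bf X z z \is Num.real.
  by apply: realM; [rewrite realV; exact: gtr0_real|exact: bf_real].
have := real_le_Re lamR bR hle.
by rewrite mulrC -ler_pdivlMr // mulrC.
Qed.


Lemma measmapZ d l m (P : 'I_l -> 'I_m -> 'M[C]_d) (a : R) X :
  measmap P (a%:C *: X) = a *: measmap P X.
Proof.
apply/matrixP => i j; rewrite !mxE -scalemxAl mxtraceZ.
by case: (\tr _) => x y /=; rewrite !mul0r subr0.
Qed.

Lemma Fsum_eq0 l m (M : 'M[R]_(l,m)) : \sum_i \sum_j `|M i j| = 0 -> M = 0.
Proof.
move=> h; apply/matrixP => i j; rewrite mxE.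
have hi : \sum_j `|M i j| = 0.
  apply: (psumr_eq0P _ h) => // k _; apply: sumr_ge0 => *; exact: normr_ge0.
have : `|M i j| = 0 by apply: (psumr_eq0P _ hi) => // *; exact: normr_ge0.
by move/eqP; rewrite normr_eq0 => /eqP.
Qed.

Lemma Fsum_ge0 l m (M : 'M[R]_(l,m)) : 0 <= \sum_i \sum_j `|M i j|.
Proof. by apply: sumr_ge0 => i _; apply: sumr_ge0 => j _; exact: normr_ge0. Qed.

Lemma herm_scale n (a : R) (X : 'M[C]_n) : herm X -> herm (a%:C *: X).
Proof. by move=> hX; rewrite /Defs.hermitian adjZ hX conjc_real. Qed.

Lemma le0_of_Re (x : C) : x \is Num.real -> 0 <= complex.Re x -> 0 <= x.
Proof. by move=> /real_complex -> h; rewrite ler0c. Qed.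

Lemma stab d l m (P : 'I_l -> 'I_m -> 'M[C]_d) (hd : (0 < d)%N) (hl : (0 < l)%N)
  (hP : forall i, POVM (P i)) (hQ : determines_pure P) :
  exists2 c, 0 < c & forall (X : 'M[C]_d) (r : 'cV[C]_d), herm X -> dotc r r = 1 ->
    (forall y, dotc r y = 0 -> 0 <= bf X y y) ->
    c * nu X <= \sum_i \sum_j `|measmap P X i j|.
Proof.
pose T1 := (('I_d * 'I_d) + 'I_d)%type.
pose N := #|{: T1 * bool}|.
pose Xof := fun w : 'rV[R]_N => (\matrix_(i, j) crd w (inl (i, j)) : 'M[C]_d).
pose rof := fun w : 'rV[R]_N => (\col_k crd w (inr k) : 'cV[C]_d).
have cX : mcont Xof.
  move=> i j; have -> : (fun w => Xof w i j) = (fun w => crd w (inl (i, j) : T1)).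
    by apply: funext => w; rewrite mxE.
  exact: ccont_crd.
have cr : mcont rof.
  move=> i j; have -> : (fun w => rof w i j) = (fun w => crd w (inr i : T1)).
    by apply: funext => w; rewrite mxE.
  exact: ccont_crd.
have cdr : ccont (fun w => dotc (rof w) (rof w)).
  rewrite /dotc; apply: (@mcont_entry _ _ _ (fun w => adj (rof w) *m rof w) 0 0).
  by apply: mcont_mul => //; exact: mcont_adj.
pose Q := fun w z => bf (Xof w) (z - dotc (rof w) z *: rof w) (z - dotc (rof w) z *: rof w).
have cQ : forall z, ccont (fun w => Q w z).
  move=> z; rewrite /Q /bf.
  pose Y := fun w => z - dotc (rof w) z *: rof w.
  have cY : mcont Y.
    apply: mcont_add; first exact: mcont_cst.
    apply: mcont_opp; apply: mcont_scale => //.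
    rewrite /dotc; apply: (@mcont_entry _ _ _ (fun w => adj (rof w) *m z) 0 0).
    by apply: mcont_mul; [exact: mcont_adj|exact: mcont_cst].
  apply: (@mcont_entry _ _ _ (fun w => adj (Y w) *m Xof w *m Y w) 0 0).
  by apply: mcont_mul => //; apply: mcont_mul => //; exact: mcont_adj.
pose A := [set w | nu (adj (Xof w) - Xof w) = 0] `&` [set w | nu (Xof w) = 1] `&`
  [set w | complex.Re (dotc (rof w) (rof w)) = 1] `&`
  [set w | complex.Im (dotc (rof w) (rof w)) = 0] `&`
  \bigcap_(z in [set: 'cV[C]_d]) [set w | 0 <= complex.Re (Q w z)].
pose F := fun w => \sum_i \sum_j `|measmap P (Xof w) i j|.
have cF : continuous F.
  apply: cont_sum => i; apply: cont_sum => j; apply: cont_norm.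
  have -> : (fun w => measmap P (Xof w) i j) = (fun w => complex.Re (\tr (Xof w *m P i j))).
    by apply: funext => w; rewrite mxE.
  apply: cont_Re; apply: ccont_tr; apply: mcont_mul => //; exact: mcont_cst.
have cA : closed A.
  apply: closedI; last by apply: closed_bigI => z _; apply: closed_gef; exact: cont_Re.
  apply: closedI; last by apply: closed_eqf; exact: cont_Im.
  apply: closedI; last by apply: closed_eqf; exact: cont_Re.
  apply: closedI; apply: closed_eqf; apply: cont_nu => //.
  by apply: mcont_add; [exact: mcont_adj|exact: mcont_opp].
have hB : forall w, A w -> forall k, `|w 0 k| <= 1.
  move=> w [[[[_ hnu] hre] _] _]; apply: crd_bound => -[[i j]|k].
    have := nu_entry (Xof w) i j; rewrite hnu mxE => h.
    by split; apply: le_trans h; rewrite ?lerDl ?lerDr.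
  by have := Re_dotc_bound k hre; rewrite mxE.
have Fpos : forall w, A w -> 0 < F w.
  move=> w [[[[hh hnu] hre] him] hz].
  rewrite lt_def Fsum_ge0 andbT; apply/negP => /eqP F0.
  have hM := Fsum_eq0 F0.
  have hX : herm (Xof w).
    by apply/eqP; rewrite -subr_eq0; apply/eqP; exact: nu_eq0.
  have r1 : dotc (rof w) (rof w) = 1.
    by apply/eqP; rewrite eq_complex hre him /= !eqxx.
  have hr : forall y, dotc (rof w) y = 0 -> 0 <= bf (Xof w) y y.
    move=> y ry; apply: le0_of_Re; first exact: bf_real.
    have := hz y I; rewrite /= /Q ry scale0r subr0; exact.
  have [e [lam [ee [Xe Hmin]]]] := rayleigh hd hX.
  have X0 := core hl hP hQ hX hr hM ee Xe Hmin.
  by move: hnu; rewrite /= X0 nu0 => /eqP; rewrite eq_sym oner_eq0.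
have [c c0 hc] := GL cA hB cF Fpos.
exists c => // X r hX r1 hr.
have [->|X0] := eqVneq X 0.
  by rewrite nu0 mulr0; exact: Fsum_ge0.
have nu0' : 0 < nu X.
  rewrite lt_def nu_ge0 andbT; apply: contra X0 => /eqP h; apply/eqP; exact: nu_eq0.
pose a := (nu X)^-1.
have a0 : 0 < a by rewrite invr_gt0.
pose X' := a%:C *: X.
pose w := enc (fun t : T1 => match t with inl p => X' p.1 p.2 | inr k => r k 0 end).
have eX : Xof w = X' by apply/matrixP => i j; rewrite mxE crd_enc.
have er : rof w = r by apply/matrixP => i j; rewrite mxE crd_enc (ord1 j).
have Aw : A w.
  rewrite /A /= eX er r1; split; first split; first split; first split.
  - by rewrite (herm_scale a hX) subrr nu0.
  - by rewrite nuZ gtr0_norm // mulVf // gt_eqF.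
  - by [].
  - by [].
  move=> z _ /=; rewrite /Q eX er; apply: Re_ge0.
  rewrite bfAZ; apply: mulr_ge0; first by rewrite ler0c ltW.
  by apply: hr; rewrite dotcBr dotcZr r1 mulr1 subrr.
have := hc _ Aw; rewrite /F eX measmapZ.
have -> : \sum_i \sum_j `|(a *: measmap P X) i j| = a * \sum_i \sum_j `|measmap P X i j|.
  rewrite mulr_sumr; apply: eq_bigr => i _; rewrite mulr_sumr; apply: eq_bigr => j _.
  by rewrite mxE normrM gtr0_norm.
by rewrite /a mulrC ler_pdivlMr.
Qed.


Lemma adj_delta2 n (i j : 'I_n) : adj (delta_mx i j : 'M[C]_n) = delta_mx j i.
Proof.
apply/matrixP => a b; rewrite !mxE conjc_nat.
by rewrite andbC.
Qed.

Lemma split_herm (x : C) n (E F : 'M[C]_n) :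
  x *: E + conjc x *: F =
  (complex.Re x)%:C *: (E + F) + (complex.Im x)%:C *: ('i *: E - 'i *: F).
Proof.
apply/matrixP => p q; rewrite !mxE.
case: x => a b /=; set u := E p q; set v := F p q.
have -> : Complex a b = a%:C + 'i * b%:C.
  by apply/eqP; rewrite eq_complex /=; apply/andP; split; apply/eqP; lra.
have -> : Complex a (- b) = a%:C - 'i * b%:C.
  by apply/eqP; rewrite eq_complex /=; apply/andP; split; apply/eqP; lra.
ring.
Qed.

Lemma NH_bound n (NH : 'M[C]_n -> R) : herm_norm NH ->
  exists2 K, 0 <= K & forall X, herm X -> NH X <= K * nu X.
Proof.
case=> N0 Ndef NZ ND.
have h0 : herm (0 : 'M[C]_n) by exact: adj0.
have NH0 : NH 0 = 0.
  have := NZ 0 0 h0; rewrite scale0r normr0 mul0r; exact.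
have Nsum : forall (I : finType) (M : I -> 'M[C]_n), (forall i, herm (M i)) ->
    herm (\sum_i M i) /\ NH (\sum_i M i) <= \sum_i NH (M i).
  move=> I M hM; elim/big_rec2: _ => [|i y1 y2 _ [h1 h2]].
    by split; [exact: h0|rewrite NH0].
  split; first by rewrite /Defs.hermitian adjD hM h1.
  by apply: le_trans (ND _ _ (hM i) h1) _; rewrite lerD2l.
pose E i j : 'M[C]_n := delta_mx i j.
have hS : forall i j, herm (E i j + E j i).
  by move=> i j; rewrite /Defs.hermitian adjD !adj_delta2 addrC.
have hT : forall i j, herm ('i *: E i j - 'i *: E j i).
  move=> i j; rewrite /Defs.hermitian adjB !adjZ !adj_delta2.
  have -> : conjc 'i = - 'i :> C by apply/eqP; rewrite eq_complex /= oppr0 !eqxx.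
  by rewrite !scaleNr opprK addrC.
pose K := \sum_i \sum_j (NH (E i j + E j i) + NH ('i *: E i j - 'i *: E j i)).
have K0 : 0 <= K.
  by apply: sumr_ge0 => i _; apply: sumr_ge0 => j _; apply: addr_ge0; exact: N0.
have Kij : forall i j, NH (E i j + E j i) <= K /\ NH ('i *: E i j - 'i *: E j i) <= K.
  move=> i j.
  have h : NH (E i j + E j i) + NH ('i *: E i j - 'i *: E j i) <= K.
    rewrite /K (bigD1 i) //= (bigD1 j) //= -addrA lerDl.
    apply: addr_ge0; first by apply: sumr_ge0 => k _; apply: addr_ge0; exact: N0.
    by apply: sumr_ge0 => k _; apply: sumr_ge0 => k' _; apply: addr_ge0; exact: N0.
  by split; apply: le_trans h; rewrite ?lerDl ?lerDr N0.
exists K => // X hX.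
pose H i j := X i j *: E i j + conjc (X i j) *: E j i.
have hH : forall i j, herm (H i j).
  move=> i j; rewrite /H split_herm.
  rewrite /Defs.hermitian adjD !adjZ !conjc_real (hS i j) (hT i j) //.
have sumH : \sum_i \sum_j H i j = X + X.
  rewrite /H; under eq_bigr do rewrite big_split /=.
  rewrite big_split /= -matrix_sum_delta; congr (_ + _).
  rewrite -[X in RHS]hX [RHS]matrix_sum_delta exchange_big /=.
  by apply: eq_bigr => i _; apply: eq_bigr => j _; rewrite mxE.
have hsum : forall i, herm (\sum_j H i j) by move=> i; case: (Nsum _ _ (hH i)).
have step1 : NH (X + X) <= \sum_i \sum_j NH (H i j).
  rewrite -sumH; case: (Nsum _ _ hsum) => _ h; apply: le_trans h _.
  by apply: ler_sum => i _; case: (Nsum _ _ (hH i)).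
have step2 : forall i j, NH (H i j) <=
    K * (`|complex.Re (X i j)| + `|complex.Im (X i j)|).
  move=> i j; rewrite /H split_herm.
  have hA := herm_scale (complex.Re (X i j)) (hS i j).
  have hB := herm_scale (complex.Im (X i j)) (hT i j).
  apply: le_trans (ND _ _ hA hB) _.
  rewrite NZ ?NZ // mulrDr; case: (Kij i j) => k1 k2.
  by apply: lerD; rewrite [leRHS]mulrC; apply: ler_wpM2l => //; exact: normr_ge0.
have eXX : X + X = (2 : R)%:C *: X.
  by rewrite -mulr2n -scaler_nat rmorph_nat.
have hX2 : NH (X + X) = 2 * NH X by rewrite eXX NZ // ger0_norm.
have : 2 * NH X <= K * nu X.
  rewrite -hX2; apply: le_trans step1 _.
  rewrite /nu mulr_sumr; apply: ler_sum => i _; rewrite mulr_sumr.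
  by apply: ler_sum => j _; exact: step2.
by move=> h; apply: le_trans h; rewrite ler_peMl ?N0 // ler1n.
Qed.


Lemma coord_le_norm N (w : 'rV[R]_N) k : `|w 0 k| <= `|w|.
Proof.
have -> : `|w| = mx_norm w by [].
rewrite mx_normrE.
exact: (@le_bigmax _ _ _ 0 (fun ij : 'I_1 * 'I_N => `|w ij.1 ij.2|) (0, k)).
Qed.

Lemma cont_lip N (f : 'rV[R]_N -> R) (K : R) : 0 <= K ->
  (forall x y, `|f x - f y| <= K * `|x - y|) -> continuous f.
Proof.
move=> K0 hf x B /nbhs_ballP [e /= e0 hB].
have K1 : 0 < K + 1 by rewrite ltr_wpDl.
apply/nbhs_ballP; exists (e / (K + 1)); first by rewrite /= divr_gt0.
move=> y; rewrite -ball_normE /= => hy; apply: hB; rewrite -ball_normE /=.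
apply: le_lt_trans (hf x y) _.
have hy' : K * `|x - y| <= K * (e / (K + 1)) by apply: ler_wpM2l => //; exact: ltW.
apply: le_lt_trans hy' _.
by rewrite mulrA ltr_pdivrMr // mulrDr mulr1 [K * e]mulrC ltrDl.
Qed.

Lemma NM_lower l m (NM : 'M[R]_(l, m) -> R) : Defs.mx_norm NM ->
  exists2 a, 0 < a & forall (f : 'M[R]_(l, m)) i j, a * `|f i j| <= NM f.
Proof.
case=> N0 Ndef NZ ND.
have NM0 : NM 0 = 0 by have := NZ 0 0; rewrite scale0r normr0 mul0r.
have NMN : forall X, NM (- X) = NM X.
  by move=> X; rewrite -scaleN1r NZ normrN1 mul1r.
have Nsum : forall (I : finType) (M : I -> 'M[R]_(l, m)),
    NM (\sum_i M i) <= \sum_i NM (M i).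
  move=> I M; elim/big_rec2: _ => [|i y1 y2 _ h]; first by rewrite NM0.
  by apply: le_trans (ND _ _) _; rewrite lerD2l.
have Nrev : forall u v, `|NM u - NM v| <= NM (u - v).
  move=> u v.
  have h1 : NM v <= NM (u - v) + NM u.
    by rewrite -(NMN (u - v)) opprB; have := ND (v - u) u; rewrite subrK.
  have h2 : NM u <= NM (u - v) + NM v by have := ND (u - v) v; rewrite subrK.
  by rewrite ler_norml; apply/andP; split; lra.
pose K := \sum_i \sum_j NM (delta_mx i j : 'M[R]_(l, m)).
have K0 : 0 <= K by apply: sumr_ge0 => i _; apply: sumr_ge0 => j _.
have Kij : forall i j, NM (delta_mx i j) <= K.
  move=> i j; rewrite /K (bigD1 i) //= (bigD1 j) //= -addrA lerDl.
  by apply: addr_ge0; apply: sumr_ge0 => *; [|apply: sumr_ge0] => *.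
have Nbound : forall M : 'M[R]_(l, m), NM M <= K * \sum_i \sum_j `|M i j|.
  move=> M; rewrite {1}[M]matrix_sum_delta.
  apply: le_trans (Nsum _ _) _; rewrite mulr_sumr; apply: ler_sum => i _.
  apply: le_trans (Nsum _ _) _; rewrite mulr_sumr; apply: ler_sum => j _.
  by rewrite NZ mulrC ler_wpM2r.
pose N := (l * m)%N.
have vec_bound : forall z : 'rV[R]_N, \sum_i \sum_j `|(vec_mx z : 'M[R]_(l, m)) i j| <= N%:R * `|z|.
  move=> z; apply: le_trans (_ : \sum_(i < l) \sum_(j < m) `|z| <= _).
    apply: ler_sum => i _; apply: ler_sum => j _; rewrite mxE.
    exact: coord_le_norm.
  by rewrite !sumr_const !card_ord -mulrnA mulr_natl mulnC.
pose F := fun w : 'rV[R]_N => NM (vec_mx w).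
have cF : continuous F.
  apply: (@cont_lip _ _ (K * N%:R)); first exact: mulr_ge0.
  move=> x y; rewrite /F; apply: le_trans (Nrev _ _) _.
  have -> : vec_mx x - vec_mx y = vec_mx (x - y).
    by apply/matrixP => i j; rewrite !mxE.
  apply: le_trans (Nbound _) _; rewrite -mulrA; apply: ler_wpM2l => //.
pose A := [set w : 'rV[R]_N | \sum_k `|w 0 k| = 1].
have cA : closed A.
  by apply: closed_eqf; apply: cont_sum => k; apply: cont_norm; exact: cont_coord.
have hB : forall w, A w -> forall k, `|w 0 k| <= 1.
  move=> w Aw k; rewrite -Aw (bigD1 k) //= lerDl.
  by apply: sumr_ge0 => *.
have Fpos : forall w, A w -> 0 < F w.
  move=> w Aw; rewrite lt_def N0 andbT; apply/negP => /eqP /Ndef h.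
  have w0 : w = 0.
    rewrite -(vec_mxK w) h; apply/rowP => k; case/mxvec_indexP: k => i j.
    by rewrite mxvecE !mxE.
  move: Aw; rewrite /A /= w0 big1 => [/eqP|k _]; last by rewrite mxE normr0.
  by rewrite eq_sym oner_eq0.
have [a a0 ha] := GL cA hB cF Fpos.
exists a => // f i j.
have [->|f0] := eqVneq f 0; first by rewrite mxE normr0 mulr0 N0.
pose s := \sum_k `|mxvec f 0 k|.
have fij : `|f i j| <= s.
  by rewrite -mxvecE /s (bigD1 (mxvec_index i j)) //= lerDl; apply: sumr_ge0 => *.
have s0 : 0 < s.
  rewrite lt_def /s sumr_ge0 // andbT; apply: contra f0 => /eqP h.
  apply/eqP/matrixP => p q; rewrite mxE; apply/eqP; rewrite -normr_eq0 -mxvecE.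
  by rewrite (psumr_eq0P _ h).
have Aw : A (s^-1 *: mxvec f).
  rewrite /A /=; under eq_bigr do rewrite mxE normrM gtr0_norm ?invr_gt0 //.
  by rewrite -mulr_sumr mulVf // gt_eqF.
have := ha _ Aw; rewrite /F.
have -> : vec_mx (s^-1 *: mxvec f) = s^-1 *: f.
  by apply/matrixP => p q; rewrite !mxE mxvecE.
rewrite NZ gtr0_norm ?invr_gt0 // => h.
apply: le_trans (ler_wpM2l (ltW a0) fij) _.
by rewrite -ler_pdivlMr // mulrC.
Qed.

End B.

Section Cs.
Variable R : realType.

Lemma frob_entry l m (g : 'M[R]_(l, m)) i j : `|g i j| <= frob g.
Proof.
rewrite /frob -sqrtr_sqr; apply: ler_wsqrtr.
rewrite (bigD1 i) //= (bigD1 j) //= -addrA lerDl.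
apply: addr_ge0; first by apply: sumr_ge0 => *; exact: sqr_ge0.
by apply: sumr_ge0 => *; apply: sumr_ge0 => *; exact: sqr_ge0.
Qed.

Lemma frob_le_sum l m (f : 'M[R]_(l, m)) : frob f <= \sum_i \sum_j `|f i j|.
Proof.
set T := \sum_i \sum_j `|f i j|.
have T0 : 0 <= T by apply: sumr_ge0 => *; apply: sumr_ge0 => *.
rewrite /frob -(ger0_norm T0) -sqrtr_sqr; apply: ler_wsqrtr.
have -> : T ^+ 2 = \sum_i \sum_j `|f i j| * T.
  by rewrite expr2 mulr_suml; apply: eq_bigr => i _; rewrite mulr_suml.
apply: ler_sum => i _; apply: ler_sum => j _.
rewrite -[f i j ^+ 2]ger0_norm ?sqr_ge0 // normrX expr2.
apply: ler_wpM2l => //; rewrite /T (bigD1 i) //= (bigD1 j) //= -addrA lerDl.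
by apply: addr_ge0; apply: sumr_ge0 => * //; apply: sumr_ge0.
Qed.

Lemma frobN l m (f : 'M[R]_(l, m)) : frob (- f) = frob f.
Proof.
by rewrite /frob; congr Num.sqrt; apply: eq_bigr => i _; apply: eq_bigr => j _; rewrite mxE sqrrN.
Qed.

Lemma entry_le_sum l m (f : 'M[R]_(l, m)) i j : `|f i j| <= \sum_i \sum_j `|f i j|.
Proof.
rewrite (bigD1 i) //= (bigD1 j) //= -addrA lerDl.
by apply: addr_ge0; apply: sumr_ge0 => * //; apply: sumr_ge0.
Qed.

End Cs.

Import Defs.
Unset Implicit Arguments.

Theorem theorem4 (R : realType) (d l m : nat)
  (hd : (0 < d)%N) (hl : (0 < l)%N) (hm : (0 < m)%N)
  (NH : 'M[R[i]]_d -> R) (NM : 'M[R]_(l, m) -> R)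
  (hNH : herm_norm NH) (hNM : mx_norm NM)
  (P : 'I_l -> 'I_m -> 'M[R[i]]_d)
  (hP : forall i, POVM (P i))
  (hQ : determines_pure P) :
  exists CQ : R, 0 < CQ /\
    forall eps : R, 0 < eps ->
    forall sigma : 'M[R[i]]_d, pure_state sigma ->
    forall f : 'M[R]_(l, m), NM f <= eps ->
    forall Y : 'M[R[i]]_d, is_minimizer P (measmap P sigma + f) Y ->
      NH (Y - sigma) <= CQ * eps.
Proof.
have [KH KH0 hKH] := NH_bound hNH.
have [a a0 ha] := NM_lower hNM.
have [c c0 hc] := stab hd hl hP hQ.
pose L : R := (l * m)%:R.
have L0 : 0 < L by rewrite ltr0n muln_gt0 hl hm.
have KH1 : 0 < KH + 1 by rewrite ltr_wpDl.
exists ((KH + 1) * (2 * L * L / (a * c))); split.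
  by apply: mulr_gt0 => //; apply: divr_gt0; apply: mulr_gt0 => //; apply: mulr_gt0.
move=> eps eps0 sigma hs f hf Y [hY hmin].
have [r [r1 hr]] := pure_hyper hs.
have hsig : psd sigma by case: hs => -[].
pose X := Y - sigma.
have hX : Defs.hermitian X.
  by rewrite /Defs.hermitian adjB hY.1 hsig.1.
have hrX : forall y, dotc r y = 0 -> 0 <= bf X y y.
  move=> y ry; rewrite bfAB.
  have -> : bf sigma y y = 0 by rewrite /bf -mulmxA hr // mulmx0 mxE.
  by rewrite subr0; exact: hY.2.
have hst := hc X r hX r1 hrX.
pose T := \sum_i \sum_j `|f i j|.
have T0 : 0 <= T by apply: sumr_ge0 => *; apply: sumr_ge0 => *.
have hT : T <= L * (eps / a).
  apply: le_trans (_ : \sum_(i < l) \sum_(j < m) (eps / a) <= _).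
    apply: ler_sum => i _; apply: ler_sum => j _.
    by rewrite ler_pdivlMr // mulrC (le_trans _ hf) //; exact: ha.
  by rewrite !sumr_const !card_ord -mulrnA mulr_natl mulnC.
have hent : forall i j, `|measmap P X i j| <= 2 * T.
  move=> i j.
  have -> : measmap P X = (measmap P Y - (measmap P sigma + f)) + f.
    by rewrite /X measmapB opprD addrA subrK.
  rewrite mxE; apply: le_trans (ler_normD _ _) _.
  rewrite mulr2n mulrDl mul1r; apply: lerD; last exact: entry_le_sum.
  apply: le_trans (frob_entry _ i j) _.
  apply: le_trans (hmin _ hsig) _.
  by rewrite opprD addrA subrr add0r frobN frob_le_sum.
have hS : \sum_i \sum_j `|measmap P X i j| <= L * (2 * T).
  apply: le_trans (_ : \sum_(i < l) \sum_(j < m) (2 * T) <= _).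
    by apply: ler_sum => i _; apply: ler_sum => j _; exact: hent.
  by rewrite !sumr_const !card_ord -mulrnA mulnC -[_ *+ (l * m)]mulr_natl.
have hnu : nu X <= 2 * L * L * eps / (a * c).
  have h1 : c * nu X <= L * (2 * (L * (eps / a))).
    apply: le_trans hst (le_trans hS _).
    apply: ler_wpM2l; first exact: ltW.
    by apply: ler_wpM2l.
  have h2 : c * nu X <= 2 * L * L * eps / a.
    by move: h1; have -> : L * (2 * (L * (eps / a))) = 2 * L * L * eps / a by ring.
  rewrite ler_pdivlMr ?mulr_gt0 //.
  have -> : nu X * (a * c) = a * (c * nu X) by ring.
  have := ler_wpM2l (ltW a0) h2.
  by rewrite [a * (_ / a)]mulrC divfK ?gt_eqF.
apply: le_trans (hKH _ hX) _.
apply: le_trans (_ : (KH + 1) * nu X <= _).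
  by apply: ler_wpM2r; [exact: nu_ge0|rewrite lerDl].
have hnu' : nu X <= 2 * L * L / (a * c) * eps.
  by move: hnu; have -> : 2 * L * L * eps / (a * c) = 2 * L * L / (a * c) * eps by ring.
have := ler_wpM2l (ltW KH1) hnu'.
by rewrite mulrA.
Qed.
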